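(* Let $N\ge 2$, let $\mathbf{K}\in\mathbb{R}^{N\times N}$ be the cyclic shift matrix ($(\mathbf{K}\mathbf{x})_1=x_N$, $(\mathbf{K}\mathbf{x})_i=x_{i-1}$ for $i\ge2$), $\mathbf{K}(\omega)=(1-\omega)\mathbf{I}+\omega\mathbf{K}$, $\mathbf{D}=\mathbf{K}-\mathbf{I}$ and $\mathbf{L}=\mathbf{K}+\mathbf{K}^T-2\mathbf{I}$. Suppose $\mathbf{a},\mathbf{b}\in\mathbb{R}^N$ are non-constant vectors. If $\nu=\operatorname{argmin}_{\omega\in\mathbb{R}}\|\mathbf{b}-\mathbf{K}(\omega)^T\mathbf{a}\|_2^2$, then $$\nu=\frac12\left(1-2\,\frac{\mathbf{a}^T\mathbf{D}\mathbf{b}}{\mathbf{a}^T\mathbf{L}\mathbf{a}}\right).$$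
   Context: A vector is constant if all its entries are equal. $\|\cdot\|_2$ is the Euclidean norm. *)

(* Defs.v *)
From HB Require Import structures.
From mathcomp Require Import all_boot all_order all_algebra.
Set Implicit Arguments. Unset Strict Implicit. Unset Printing Implicit Defensive.
Import Order.TTheory GRing.Theory Num.Theory.
Local Open Scope ring_scope.

(* Cyclic shift matrix K: (K x)_0 = x_(N-1), (K x)_i = x_(i-1) for i >= 1
   (0-based indices), i.e. K i j = 1 iff i = (j+1) mod N. *)
Definition shiftK (R : ringType) (N : nat) : 'M[R]_N :=
  \matrix_(i < N, j < N) ((nat_of_ord i == (j.+1 %% N)%N)%:R).

Definition Kom (R : comRingType) (N : nat) (w : R) : 'M[R]_N :=
  (1 - w)%:M + w *: shiftK R N.

Definition Dmx (R : ringType) (N : nat) : 'M[R]_N := shiftK R N - 1%:M.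

Definition Lmx (R : ringType) (N : nat) : 'M[R]_N :=
  shiftK R N + (shiftK R N)^T - 2%:M.

Definition sqnorm (R : ringType) (N : nat) (v : 'cV[R]_N) : R :=
  \sum_(i < N) v i 0 ^+ 2.

Definition is_constant (R : ringType) (N : nat) (v : 'cV[R]_N) : Prop :=
  forall i j : 'I_N, v i 0 = v j 0.

(* Main.v *)
Require Import Defs.
From HB Require Import structures.
From mathcomp Require Import all_boot all_order all_algebra.
From mathcomp Require Import ring lra.
Import Order.TTheory GRing.Theory Num.Theory.
Local Open Scope ring_scope.

Section H.
Variable R : realFieldType.
Variable N : nat.

Lemma sK (v : 'I_N -> R) (i : 'I_N) :
  \sum_j shiftK R N j i * v j = v (ordS i).
Proof.
rewrite (bigD1 (ordS i)) //= big1 => [|j hj]; rewrite !mxE.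
  by rewrite eqxx mul1r addr0.
have -> : (nat_of_ord j == (i.+1 %% N)%N) = false by exact: negbTE hj.
by rewrite mul0r.
Qed.

Lemma sI (c : R) (v : 'I_N -> R) (i : 'I_N) :
  \sum_j (c *+ (j == i)) * v j = c * v i.
Proof.
rewrite (bigD1 i) //= big1 => [|j hj]; first by rewrite eqxx mulr1n addr0.
by rewrite (negbTE hj) mulr0n mul0r.
Qed.

Lemma sI' (c : R) (v : 'I_N -> R) (i : 'I_N) :
  \sum_j (c *+ (i == j)) * v j = c * v i.
Proof.
by rewrite -(sI c v i); apply: eq_bigr => j _; rewrite eq_sym.
Qed.

End H.
Arguments sK {R N}. Arguments sI {R N}. Arguments sI' {R N}.

Theorem lemma3p4 (R : realFieldType) (N : nat) (hN : (2 <= N)%N)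
  (a b : 'cV[R]_N)
  (ha : ~ is_constant a) (hb : ~ is_constant b) (nu : R)
  (hnu : forall w : R,
      sqnorm (b - (Kom N nu)^T *m a) <= sqnorm (b - (Kom N w)^T *m a)) :
  nu = 2^-1 * (1 - 2 * ((a^T *m Dmx R N *m b) 0 0 / (a^T *m Lmx R N *m a) 0 0)).
Proof.
pose s := @ordS N.
pose A := \sum_i a i 0 ^+ 2.
pose S := \sum_i a i 0 * a (s i) 0.
pose E := \sum_i (a (s i) 0 - a i 0) * b i 0.
pose Q := \sum_i (a (s i) 0 - a i 0) ^+ 2.
pose P := \sum_i (b i 0 - a i 0) * (a (s i) 0 - a i 0).
pose C := \sum_i (b i 0 - a i 0) ^+ 2.
have ent : forall w i, (b - (Kom N w)^T *m a) i 0
    = (b i 0 - a i 0) - w * (a (s i) 0 - a i 0).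
  move=> w i; rewrite !mxE.
  rewrite (eq_bigr (fun j => (1 - w) *+ (j == i) * a j 0
                       + w * (shiftK R N j i * a j 0))); last first.
    by move=> j _; rewrite !mxE mulrDl mulrA.
  rewrite big_split /= sI -mulr_sumr (sK (fun j => a j 0)); ring.
have fw : forall w, sqnorm (b - (Kom N w)^T *m a) = C - 2 * w * P + w ^+ 2 * Q.
  move=> w; rewrite /sqnorm (eq_bigr _ (fun i _ => congr1 (fun x => x ^+ 2) (ent w i))).
  rewrite /C /P /Q mulr_sumr [w ^+ 2 * _]mulr_sumr -sumrN -!big_split /=.
  by apply: eq_bigr => i _; ring.
have sA : \sum_i a (s i) 0 ^+ 2 = A.
  by rewrite /A [RHS](reindex_inj (@ordS_inj N)).
have hQ : Q = 2 * A - 2 * S.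
  rewrite /Q (eq_bigr (fun i => a (s i) 0 ^+ 2 + (a i 0 ^+ 2 - 2 * (a i 0 * a (s i) 0))));
    last by move=> i _; ring.
  rewrite big_split /= sA big_split /= sumrN -mulr_sumr /A /S; ring.
have hP : P = E - S + A.
  rewrite /E /S /A -sumrN -!big_split /=; apply: eq_bigr => i _; ring.
have Q0 : Q != 0.
  apply/negP => /eqP Q0; apply: ha.
  have hs : forall i, a (s i) 0 = a i 0.
    move=> i; apply/eqP; rewrite -subr_eq0 -sqrf_eq0; apply/eqP.
    move: Q0; rewrite /Q => /eqP; rewrite psumr_eq0 => [/allP H|j _]; last exact: sqr_ge0.
    by apply/eqP; apply: H; rewrite mem_index_enum.
  have N0 : (0 < N)%N by apply: leq_trans hN.
  have hk : forall k (hk : (k < N)%N), a (Ordinal hk) 0 = a (Ordinal N0) 0.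
    elim=> [|k IH] hk.
      by congr (a _ 0); apply: val_inj.
    rewrite -(IH (ltnW hk)) -(hs (Ordinal (ltnW hk))); congr (a _ 0); apply: val_inj.
    by rewrite /s /= modn_small.
  by move=> [i hi] [j hj]; rewrite !hk.
have eD : (a^T *m Dmx R N *m b) 0 0 = E.
  rewrite mxE /E; apply: eq_bigr => j _; congr (_ * _).
  rewrite mxE.
  rewrite (eq_bigr (fun k => shiftK R N k j * a k 0 - (1 *+ (k == j)) * a k 0)).
    by rewrite sumrB (sK (fun k => a k 0)) sI mul1r.
  by move=> k _; rewrite !mxE; ring.
have eL : (a^T *m Lmx R N *m a) 0 0 = 2 * S - 2 * A.
  rewrite mxE.
  rewrite (eq_bigr (fun j => \sum_k (a k 0 * shiftK R N k j * a j 0)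
            + \sum_k (a k 0 * shiftK R N j k * a j 0)
            - \sum_k ((2 *+ (k == j)) * a k 0 * a j 0))); last first.
    move=> j _; rewrite mxE mulr_suml -big_split -sumrB /=.
    by apply: eq_bigr => k _; rewrite !mxE; ring.
  rewrite sumrB big_split /=.
  have e1 : \sum_j \sum_k (a k 0 * shiftK R N k j * a j 0) = S.
    rewrite /S; apply: eq_bigr => j _.
    rewrite (_ : a (s j) 0 = \sum_k shiftK R N k j * a k 0); last by rewrite (sK (fun k => a k 0)).
    rewrite mulr_sumr; apply: eq_bigr => k _; ring.
  have e2 : \sum_j \sum_k (a k 0 * shiftK R N j k * a j 0) = S.
    rewrite exchange_big /S; apply: eq_bigr => k _.
    rewrite (_ : a (s k) 0 = \sum_j shiftK R N j k * a j 0); last by rewrite (sK (fun j => a j 0)).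
    rewrite mulr_sumr; apply: eq_bigr => j _; ring.
  have e3 : \sum_j \sum_k ((2 *+ (k == j)) * a k 0 * a j 0) = 2 * A.
    rewrite /A mulr_sumr; apply: eq_bigr => j _.
    rewrite -mulr_suml (sI 2 (fun k => a k 0)); ring.
  rewrite e1 e2 e3; ring.
have hnuQ : nu = P / Q.
  have := hnu (P / Q); rewrite !fw.
  have -> : C - 2 * (P / Q) * P + (P / Q) ^+ 2 * Q
          = C - 2 * nu * P + nu ^+ 2 * Q - Q * (nu - P / Q) ^+ 2.
    by field.
  move=> H0; have H : Q * (nu - P / Q) ^+ 2 <= 0 by lra.
  have Qp : 0 < Q.
    rewrite lt_def Q0 /Q sumr_ge0 // => i _; exact: sqr_ge0.
  have : Q * (nu - P / Q) ^+ 2 == 0.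
    by rewrite eq_le H mulr_ge0 ?sqr_ge0 // ltW.
  rewrite mulf_eq0 (negbTE Q0) /= sqrf_eq0 subr_eq0 => /eqP //.
rewrite hnuQ eD eL hP.
move: Q0; rewrite hQ => Q0.
have L0 : 2 * S - 2 * A != 0 by rewrite -oppr_eq0 opprB.
field; rewrite ?L0 //.
Qed.
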